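(* ${\bf KB^\boxdot}$ is strongly complete with respect to the class of symmetric bimodal frames: every ${\bf KB^\boxdot}$-consistent set of $\mathcal{L}(\boxdot)$-formulas is satisfiable at some state of some bimodal model in which both $R_1$ and $R_2$ are symmetric.
   Context: Fix a nonempty set $\mathbf{P}$ of propositional variables. A bimodal model is $\langle S,R_1,R_2,V\rangle$ with $S$ nonempty, $R_1,R_2\subseteq S\times S$, $V:\mathbf{P}\to\mathcal{P}(S)$. $\mathcal{L}(\boxdot):\ \phi::=p\mid\neg\phi\mid(\phi\wedge\phi)\mid\boxdot\phi$. Truth: $\mathcal{M},s\vDash\boxdot\phi$ iff for all $t,u$ with $sR_1t$ and $sR_2u$, ($\mathcal{M},t\vDash\phi\iff\mathcal{M},u\vDash\phi$); atoms and Booleans as usual. ${\bf K^\boxdot}$ has axioms: all instances of propositional tautologies; $\boxdot\top$; $\boxdot\phi\leftrightarrow\boxdot\neg\phi$; $\boxdot\phi\wedge\boxdot\psi\to\boxdot(\phi\wedge\psi)$; $\boxdot\phi\to\boxdot(\phi\vee\psi)\vee\boxdot(\neg\phi\vee\chi)$; rules: modus ponens and RE: from $\phi\leftrightarrow\psi$ infer $\boxdot\phi\leftrightarrow\boxdot\psi$. ${\bf KB^\boxdot}$ is ${\bf K^\boxdot}$ plus the axiom schema $\phi\to\boxdot((\boxdot\phi\wedge\boxdot(\phi\to\psi)\wedge\neg\boxdot\psi)\to\chi)$. A set is consistent if no finite conjunction of its members has a provable negation. *)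

(* Defs.v *)
From Stdlib Require Import List.
Import ListNotations.
Set Implicit Arguments.

Inductive form (P : Type) : Type :=
| Var : P -> form P
| Neg : form P -> form P
| And : form P -> form P -> form P
| Dot : form P -> form P.

Arguments Var {P} _.
Arguments Neg {P} _.
Arguments And {P} _ _.
Arguments Dot {P} _.

(* Abbreviations.  Top uses a fixed variable p0 (P is nonempty). *)
Definition Top {P} (p0 : P) : form P := Neg (And (Var p0) (Neg (Var p0))).
Definition Or {P} (a b : form P) : form P := Neg (And (Neg a) (Neg b)).
Definition Imp {P} (a b : form P) : form P := Neg (And a (Neg b)).
Definition Iff {P} (a b : form P) : form P := And (Imp a b) (Imp b a).

(* Propositional tautologies: true under every boolean assignment to the
   propositional atoms and to the boxdot-formulas (treated as atoms). *)
Fixpoint beval {P} (f : form P -> bool) (a : form P) : bool :=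
  match a with
  | Var p => f (Var p)
  | Neg b => negb (beval f b)
  | And b c => andb (beval f b) (beval f c)
  | Dot b => f (Dot b)
  end.

Definition tautology {P} (a : form P) : Prop := forall f, beval f a = true.

Inductive KBprov {P} (p0 : P) : form P -> Prop :=
| ax_taut a : tautology a -> KBprov p0 a
| ax_top : KBprov p0 (Dot (Top p0))
| ax_neg a : KBprov p0 (Iff (Dot a) (Dot (Neg a)))
| ax_and a b : KBprov p0 (Imp (And (Dot a) (Dot b)) (Dot (And a b)))
| ax_or a b c : KBprov p0 (Imp (Dot a) (Or (Dot (Or a b)) (Dot (Or (Neg a) c))))
| ax_B a b c : KBprov p0
    (Imp a (Dot (Imp (And (And (Dot a) (Dot (Imp a b))) (Neg (Dot b))) c)))
| rule_mp a b : KBprov p0 (Imp a b) -> KBprov p0 a -> KBprov p0 b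
| rule_RE a b : KBprov p0 (Iff a b) -> KBprov p0 (Iff (Dot a) (Dot b)).

Fixpoint conj_list {P} (p0 : P) (l : list (form P)) : form P :=
  match l with
  | [] => Top p0
  | a :: l' => And a (conj_list p0 l')
  end.

Definition KB_consistent {P} (p0 : P) (G : form P -> Prop) : Prop :=
  forall l : list (form P), (forall a, In a l -> G a) ->
    ~ KBprov p0 (Neg (conj_list p0 l)).

Record model (P : Type) : Type := {
  st : Type;
  R1 : st -> st -> Prop;
  R2 : st -> st -> Prop;
  val : P -> st -> Prop }.

Fixpoint sat {P} (M : model P) (s : st M) (a : form P) : Prop :=
  match a with
  | Var p => val M p s
  | Neg b => ~ sat M s b
  | And b c => sat M s b /\ sat M s c
  | Dot b => forall t u, R1 M s t -> R2 M s u -> (sat M t b <-> sat M u b)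
  end.

Definition symmetric_rel {S} (R : S -> S -> Prop) : Prop :=
  forall x y, R x y -> R y x.

(* Main.v *)
Require Import Defs.
From Stdlib Require Import List Classical.
Import ListNotations.
From mathcomp Require classical_sets.

Ltac taut :=
  let f := fresh "f" in
  intro f; unfold Imp, Iff, Or, Top in *; simpl;
  repeat match goal with
  | |- context [beval ?g ?x] => destruct (beval g x)
  | |- context [?g (Dot ?x)] => destruct (g (Dot x))
  | |- context [?g (Var ?x)] => destruct (g (Var x))
  end; reflexivity.

Lemma tmp1 {P} (p0 : P) a b : tautology (Imp a b) -> KBprov p0 a -> KBprov p0 b.
Proof. intros H1 H2. eapply rule_mp; [apply ax_taut; exact H1|exact H2]. Qed.

Lemma tmp2 {P} (p0 : P) a b c : tautology (Imp a (Imp b c)) ->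
  KBprov p0 a -> KBprov p0 b -> KBprov p0 c.
Proof. intros H1 H2 H3. eapply rule_mp; [eapply tmp1; [exact H1|exact H2]|exact H3]. Qed.

Lemma tmp3 {P} (p0 : P) a b c d : tautology (Imp a (Imp b (Imp c d))) ->
  KBprov p0 a -> KBprov p0 b -> KBprov p0 c -> KBprov p0 d.
Proof. intros H1 H2 H3 H4. eapply rule_mp; [eapply tmp2; [exact H1|exact H2|exact H3]|exact H4]. Qed.

Definition mcs {P} (p0 : P) (G : form P -> Prop) :=
  KB_consistent p0 G /\ forall a, G a \/ G (Neg a).


Lemma mcs_not_both {P} (p0 : P) G a : mcs p0 G -> G a -> G (Neg a) -> False.
Proof.
  intros [HC _] H1 H2. apply (HC [a; Neg a]).
  - intros c [<-|[<-|[]]]; auto.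
  - apply ax_taut. taut.
Qed.

Lemma mcs_prov {P} (p0 : P) G a : mcs p0 G -> KBprov p0 a -> G a.
Proof.
  intros HM Hp. destruct (proj2 HM a) as [H|H]; auto. exfalso.
  apply (proj1 HM [Neg a]).
  - intros c [<-|[]]; auto.
  - eapply tmp1; [|exact Hp]. taut.
Qed.

Lemma mcs_mp {P} (p0 : P) G a b : mcs p0 G -> G (Imp a b) -> G a -> G b.
Proof.
  intros HM H1 H2. destruct (proj2 HM b) as [H|H]; auto. exfalso.
  apply (proj1 HM [Imp a b; a; Neg b]).
  - intros c [<-|[<-|[<-|[]]]]; auto.
  - apply ax_taut. taut.
Qed.

Lemma mcs_neg {P} (p0 : P) G a : mcs p0 G -> (G (Neg a) <-> ~ G a).
Proof.
  intros HM; split.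
  - intros H1 H2; eapply mcs_not_both; eauto.
  - intros H; destruct (proj2 HM a); tauto.
Qed.

Lemma mcs_t1 {P} (p0 : P) G a b : mcs p0 G -> tautology (Imp a b) -> G a -> G b.
Proof. intros HM Ht Ha. eapply (mcs_mp p0 G); eauto. apply (mcs_prov p0); auto. apply ax_taut; auto. Qed.

Lemma mcs_t2 {P} (p0 : P) G a b c : mcs p0 G -> tautology (Imp a (Imp b c)) -> G a -> G b -> G c.
Proof. intros HM Ht Ha Hb. eapply (mcs_mp p0 G); eauto. eapply (mcs_t1 p0 G); eauto. Qed.

Lemma mcs_and {P} (p0 : P) G a b : mcs p0 G -> (G (And a b) <-> G a /\ G b).
Proof.
  intros HM; split.
  - intros H; split; eapply (mcs_t1 p0 G); eauto; taut.
  - intros [H1 H2]; apply (mcs_t2 p0 G a b); auto; taut.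
Qed.

Lemma mcs_RE {P} (p0 : P) G a b : mcs p0 G -> KBprov p0 (Iff a b) -> G (Dot a) -> G (Dot b).
Proof.
  intros HM Hp H. apply rule_RE in Hp. eapply (mcs_mp p0 G); eauto.
  apply (mcs_prov p0); auto. eapply tmp1; [|exact Hp]. taut.
Qed.

Lemma mcs_REt {P} (p0 : P) G a b : mcs p0 G -> tautology (Iff a b) -> G (Dot a) -> G (Dot b).
Proof. intros HM Ht. apply (mcs_RE p0); auto. apply ax_taut; auto. Qed.

Lemma mcs_dotneg {P} (p0 : P) G a : mcs p0 G -> (G (Dot a) <-> G (Dot (Neg a))).
Proof.
  intros HM. pose proof (mcs_prov p0 G _ HM (ax_neg p0 a)) as H.
  split; intro H'.
  - exact (mcs_t2 p0 G (Iff (Dot a) (Dot (Neg a))) (Dot a) (Dot (Neg a)) HM ltac:(taut) H H').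
  - exact (mcs_t2 p0 G (Iff (Dot a) (Dot (Neg a))) (Dot (Neg a)) (Dot a) HM ltac:(taut) H H').
Qed.

Lemma mcs_dotand {P} (p0 : P) G a b : mcs p0 G -> G (Dot a) -> G (Dot b) -> G (Dot (And a b)).
Proof.
  intros HM H1 H2. pose proof (mcs_prov p0 G _ HM (ax_and p0 a b)) as H.
  eapply (mcs_mp p0 G); eauto. apply (mcs_and p0 G); auto.
Qed.

Lemma mcs_kuhn {P} (p0 : P) G a b c : mcs p0 G -> G (Dot a) ->
  G (Dot (Or a b)) \/ G (Dot (Or (Neg a) c)).
Proof.
  intros HM H1. pose proof (mcs_prov p0 G _ HM (ax_or p0 a b c)) as H.
  pose proof (mcs_mp p0 G _ _ HM H H1) as H2.
  destruct (classic (G (Dot (Or a b)))) as [|Hn]; auto. right.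
  apply (mcs_neg p0 G) in Hn; auto. refine (mcs_t2 p0 G _ _ _ HM _ H2 Hn); taut.
Qed.

Lemma split_list {P} (p0 : P) (M : form P -> Prop) x l :
  (forall a, In a l -> M a \/ a = x) ->
  exists l', (forall a, In a l' -> M a) /\
    KBprov p0 (Imp (And x (conj_list p0 l')) (conj_list p0 l)).
Proof.
  induction l as [|b l IH]; intros Hl.
  - exists []. split; [intros a []|]. apply ax_taut. taut.
  - destruct IH as [l' [H1 H2]]. { intros a Ha; apply Hl; right; auto. }
    destruct (Hl b (or_introl eq_refl)) as [Hb|Hb].
    + exists (b :: l'). split.
      * intros a [<-|Ha]; auto.
      * refine (tmp1 p0 _ _ _ H2). simpl. taut.
    + subst b. exists l'. split; auto.
      refine (tmp1 p0 _ _ _ H2). simpl. taut.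
Qed.

Lemma conj_app {P} (p0 : P) l1 l2 :
  KBprov p0 (Imp (conj_list p0 (l1 ++ l2)) (And (conj_list p0 l1) (conj_list p0 l2))).
Proof.
  induction l1 as [|b l1 IH]; simpl.
  - apply ax_taut. taut.
  - refine (tmp1 p0 _ _ _ IH). taut.
Qed.

Lemma maximal_mcs {P} (p0 : P) G : KB_consistent p0 G ->
  (forall a, KB_consistent p0 (fun b => G b \/ b = a) -> G a) -> mcs p0 G.
Proof.
  intros HC Hmax. split; auto. intros a.
  destruct (classic (G a)) as [|Ha]; auto.
  destruct (classic (G (Neg a))) as [|Hna]; auto. exfalso.
  assert (E1 : ~ KB_consistent p0 (fun b => G b \/ b = a)) by (intro; apply Ha; auto).
  assert (E2 : ~ KB_consistent p0 (fun b => G b \/ b = Neg a)) by (intro; apply Hna; auto).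
  unfold KB_consistent in E1, E2.
  apply not_all_ex_not in E1. destruct E1 as [l1 E1].
  apply not_all_ex_not in E2. destruct E2 as [l2 E2].
  apply imply_to_and in E1. destruct E1 as [S1 P1]. apply NNPP in P1.
  apply imply_to_and in E2. destruct E2 as [S2 P2]. apply NNPP in P2.
  destruct (split_list p0 G a l1 S1) as [m1 [T1 Q1]].
  destruct (split_list p0 G (Neg a) l2 S2) as [m2 [T2 Q2]].
  apply (HC (m1 ++ m2)).
  - intros b Hb. apply in_app_or in Hb. destruct Hb; auto.
  - pose proof (conj_app p0 m1 m2) as C.
    assert (A1 : KBprov p0 (Neg (And a (conj_list p0 m1)))).
    { refine (tmp2 p0 _ _ _ _ Q1 P1). taut. }
    assert (A2 : KBprov p0 (Neg (And (Neg a) (conj_list p0 m2)))).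
    { refine (tmp2 p0 _ _ _ _ Q2 P2). taut. }
    refine (tmp3 p0 _ _ _ _ _ A1 A2 C). taut.
Qed.

Lemma lindenbaum {P} (p0 : P) G : KB_consistent p0 G ->
  exists D, mcs p0 D /\ forall a, G a -> D a.
Proof.
  intros HG.
  destruct (@classical_sets.Zorn_bigcup (form P)
     (fun X => KB_consistent p0 (fun a => G a \/ X a))) as [A [HA Hmax]].
  - intros F HF Htot. unfold KB_consistent. intros l Hl.
    assert (K : (forall a, In a l -> G a) \/
                exists X, F X /\ forall a, In a l -> G a \/ X a).
    { clear - Hl Htot. induction l as [|b l IH].
      - left; intros a [].
      - destruct IH as [IH|[X [FX IH]]].
        + intros a Ha; apply Hl; right; auto.
        + destruct (Hl b (or_introl eq_refl)) as [Hb|[Y FY Yb]].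
          * left. intros a [<-|Ha]; auto.
          * right. exists Y. split; auto. intros a [<-|Ha]; auto.
        + destruct (Hl b (or_introl eq_refl)) as [Hb|[Y FY Yb]].
          * right. exists X. split; auto. intros a [<-|Ha]; auto.
          * destruct (Htot X Y FX FY) as [XY|YX].
            -- right. exists Y. split; auto. intros a [<-|Ha]; auto.
               destruct (IH a Ha); auto.
            -- right. exists X. split; auto. intros a [<-|Ha]; auto. }
    destruct K as [K|[X [FX K]]].
    + apply (HG l K).
    + apply (HF X FX l K).
  - exists (fun a => G a \/ A a). split.
    + apply maximal_mcs; auto.
      intros a Ha. destruct (classic (A a)) as [|Hn]; auto. exfalso.
      apply (Hmax (fun b => A b \/ b = a)).
      * split. intros t Ht; auto. intros Hs. apply Hn. apply Hs. auto.
      * intros l Hl. apply (Ha l). intros b Hb. destruct (Hl b Hb) as [|[|]]; auto.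
    + auto.
Qed.

Definition Nb {P} (s : form P -> Prop) (a : form P) : Prop :=
  s (Dot a) /\ forall b, s (Dot (Or a b)).

Definition Eb {P} (s t : form P -> Prop) : Prop := forall a, Nb s a -> t a.

Lemma N_top {P} (p0 : P) s : mcs p0 s -> Nb s (Top p0).
Proof.
  intros HM. split.
  - apply (mcs_prov p0); auto. apply ax_top.
  - intros b. refine (mcs_REt p0 s (Top p0) _ HM _ _). taut.
    apply (mcs_prov p0); auto. apply ax_top.
Qed.

Lemma N_and {P} (p0 : P) s a b : mcs p0 s -> Nb s a -> Nb s b -> Nb s (And a b).
Proof.
  intros HM [A1 A2] [B1 B2]. split.
  - apply (mcs_dotand p0); auto.
  - intros c. pose proof (mcs_dotand p0 s _ _ HM (A2 c) (B2 c)) as H.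
    refine (mcs_REt p0 s _ _ HM _ H). taut.
Qed.

Lemma N_mono {P} (p0 : P) s a b : mcs p0 s -> Nb s a -> KBprov p0 (Imp a b) -> Nb s b.
Proof.
  intros HM [A1 A2] Hp. split.
  - refine (mcs_RE p0 s (Or a b) b HM _ (A2 b)).
    refine (tmp1 p0 _ _ _ Hp). taut.
  - intros c. refine (mcs_RE p0 s (Or a (Or b c)) _ HM _ (A2 (Or b c))).
    refine (tmp1 p0 _ _ _ Hp). taut.
Qed.

Lemma N_conj {P} (p0 : P) s l : mcs p0 s -> (forall a, In a l -> Nb s a) ->
  Nb s (conj_list p0 l).
Proof.
  intros HM. induction l as [|b l IH]; intros Hl; simpl.
  - apply N_top; auto.
  - apply (N_and p0); auto. apply Hl; left; auto. apply IH. intros a Ha; apply Hl; right; auto.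
Qed.

Lemma K1 {P} (p0 : P) s t u a : mcs p0 s -> mcs p0 t -> mcs p0 u ->
  s (Dot a) -> Eb s t -> Eb s u -> (t a <-> u a).
Proof.
  intros Hs Ht Hu Ha Et Eu.
  destruct (classic (forall b, s (Dot (Or a b)))) as [Hall|Hn].
  - assert (N : Nb s a) by (split; auto). split; intros _; auto.
  - apply not_all_ex_not in Hn. destruct Hn as [b Hb].
    assert (N : Nb s (Neg a)).
    { split.
      - apply (mcs_dotneg p0 s a Hs); auto.
      - intros c. destruct (mcs_kuhn p0 s a b c Hs Ha); tauto. }
    apply Et in N as N1. apply Eu in N as N2.
    apply (mcs_neg p0) in N1; auto. apply (mcs_neg p0) in N2; auto. tauto.
Qed.

Lemma K2 {P} (p0 : P) s a : mcs p0 s -> ~ s (Dot a) ->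
  exists t, mcs p0 t /\ Eb s t /\ t a.
Proof.
  intros Hs Hna.
  destruct (lindenbaum p0 (fun b => Nb s b \/ b = a)) as [t [Ht Hsub]].
  - intros l Hl Hp.
    destruct (split_list p0 (Nb s) a l Hl) as [l' [H1 H2]].
    assert (C : Nb s (conj_list p0 l')) by (apply N_conj; auto).
    assert (I : KBprov p0 (Imp (conj_list p0 l') (Neg a))).
    { refine (tmp2 p0 _ _ _ _ H2 Hp). taut. }
    destruct (N_mono p0 s _ _ Hs C I) as [D _].
    apply Hna. apply (mcs_dotneg p0); auto.
  - exists t. split; auto. split.
    + intros b Hb; apply Hsub; auto.
    + apply Hsub; auto.
Qed.

Lemma K3 {P} (p0 : P) s t : mcs p0 s -> mcs p0 t -> Eb s t ->
  (exists c, ~ t (Dot c)) -> Eb t s.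
Proof.
  intros Hs Ht E [c Hc] a [Na1 Na2].
  apply NNPP. intro Hna. apply (mcs_neg p0) in Hna; auto.
  pose (X := And (And (Dot (Neg a)) (Dot (Imp (Neg a) c))) (Neg (Dot c))).
  assert (NX : Nb s (Neg X)).
  { pose proof (fun d => mcs_prov p0 s _ Hs (ax_B p0 (Neg a) c d)) as B.
    pose proof (fun d => mcs_mp p0 s _ _ Hs (B d) Hna) as B'.
    split.
    - refine (mcs_REt p0 s _ _ Hs _ (B' (Neg (Top p0)))). unfold X. taut.
    - intros d. refine (mcs_REt p0 s _ _ Hs _ (B' d)). unfold X. taut. }
  apply E in NX. apply (mcs_neg p0) in NX; auto. apply NX. unfold X.
  apply (mcs_and p0); auto. split.
  - apply (mcs_and p0); auto. split.
    + apply (proj1 (mcs_dotneg p0 t a Ht)); auto.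
    + exact (Na2 c).
  - apply (mcs_neg p0); auto.
Qed.

Definition mstate {P} (p0 : P) := ({s : form P -> Prop | mcs p0 s} * bool)%type.

Definition Rel {P} (p0 : P) (x y : mstate p0) (bb : bool) : Prop :=
  (Eb (proj1_sig (fst x)) (proj1_sig (fst y)) \/ Eb (proj1_sig (fst y)) (proj1_sig (fst x))) /\
  ((exists c, ~ proj1_sig (fst x) (Dot c)) \/ snd x = bb) /\
  ((exists c, ~ proj1_sig (fst y) (Dot c)) \/ snd y = bb).

Definition cmodel {P} (p0 : P) : model P := {|
  st := mstate p0;
  R1 := fun x y => Rel p0 x y true;
  R2 := fun x y => Rel p0 x y false;
  val := fun p x => proj1_sig (fst x) (Var p) |}.

Lemma truth {P} (p0 : P) a : forall (x : st (cmodel p0)),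
  sat (cmodel p0) x a <-> proj1_sig (fst x) a.
Proof.
  induction a as [p|a IH|a IHa b IHb|a IH]; intros [[s Hs] bx]; simpl in *.
  - tauto.
  - rewrite IH. simpl. rewrite (mcs_neg p0 s a Hs). tauto.
  - rewrite IHa, IHb. simpl. rewrite (mcs_and p0 s a b Hs). tauto.
  - split.
    + intros H. apply NNPP. intros Hn.
      destruct (K2 p0 s a Hs Hn) as [t1 [Ht1 [E1 T1]]].
      assert (Hn' : ~ s (Dot (Neg a))) by (rewrite <- (mcs_dotneg p0 s a Hs); auto).
      destruct (K2 p0 s (Neg a) Hs Hn') as [t2 [Ht2 [E2 T2]]].
      specialize (H (exist _ t1 Ht1, true) (exist _ t2 Ht2, false)).
      rewrite IH, IH in H. simpl in H.
      apply (mcs_neg p0) in T2; auto. apply T2. apply H; auto.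
      * split; simpl; auto. split; auto. left; exists a; auto.
      * split; simpl; auto. split; auto. left; exists a; auto.
    + intros H [[t Ht] b1] [[u Hu] b2] [R1a [R1b R1c]] [R2a [R2b R2c]].
      rewrite IH, IH. simpl in *.
      assert (Cs : exists c, ~ s (Dot c)).
      { destruct R1b as [|R1b]; auto. destruct R2b as [|R2b]; auto. congruence. }
      assert (Et : Eb s t).
      { destruct R1a as [|R1a]; auto. apply (K3 p0 t s); auto. }
      assert (Eu : Eb s u).
      { destruct R2a as [|R2a]; auto. apply (K3 p0 u s); auto. }
      apply (K1 p0 s t u a); auto.
Qed.

Theorem mainTheorem16 (P : Type) (p0 : P) (G : form P -> Prop) :
  KB_consistent p0 G ->
  exists (M : model P) (s : st M),
    symmetric_rel (R1 M) /\ symmetric_rel (R2 M) /\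
    (forall a, G a -> sat M s a).
Proof.
  intros HG. destruct (lindenbaum p0 G HG) as [D [HD Hsub]].
  exists (cmodel p0). exists (exist _ D HD, true). split; [|split].
  - intros x y [H1 [H2 H3]]. split; [tauto|tauto].
  - intros x y [H1 [H2 H3]]. split; [tauto|tauto].
  - intros a Ha. apply truth. simpl. auto.
Qed.
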